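(* For every $a\in(0,\pi/4)$ one has $\Omega(a)=\Xi(-\beta(a))$, where $\beta(a)\in(0,\pi/2)$ is defined by $\cos^4\beta(a)=4\sin^2a\cos^2a$. In particular $\lim_{a\to0+}\Omega(a)=\frac\pi2$ equals $\lim_{\beta\to\pi/2}\Xi(-\beta)$.
   Context: $\Omega(a)=\sin a\cos a\int_a^{\pi/2-a}\frac{d\nu}{\cos\nu\sqrt{\sin^2\nu\cos^2\nu-\sin^2a\cos^2a}}$ for $a\in(0,\pi/4)$. For $b\in(-\pi/2,0)$, $\Xi(b)=\cos^2b\int_b^{-b}\frac{d\varphi}{\cos\varphi\sqrt{\cos^4\varphi-\cos^4b}}$. ($\Omega(a)$ is the increment of $\lambda$ along half an oscillation of the unit-speed geodesic of $4\pi^2\sin^2\nu(d\nu^2+\cos^2\nu d\lambda^2)$ with minimum $\nu=a$; $\Xi(b)$ is the increment of $\theta$ along half an oscillation of the unit-speed geodesic of $4\pi^2\cos^2\varphi(d\varphi^2+\cos^2\varphi d\theta^2)$ with minimum $\varphi=b$.) *)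

(* Defs.v *)
From Stdlib Require Import Reals Lra ClassicalEpsilon.
Open Scope R_scope.

(* Improper Riemann integral over the open interval (a,b), allowing
   singularities at both endpoints: l is the limit of int_u^v f as
   u -> a+ and v -> b-. *)
Definition improper_integral (f : R -> R) (a b l : R) : Prop :=
  a < b /\
  (forall u v, a < u -> u <= v -> v < b -> inhabited (Riemann_integrable f u v)) /\
  (forall eps, eps > 0 -> exists delta, delta > 0 /\
     forall u v (pr : Riemann_integrable f u v),
       a < u -> u < a + delta -> b - delta < v -> v < b ->
       Rabs (RiemannInt pr - l) < eps).

(* The value of the improper integral (chosen classically; meaningful
   when the integral converges). *)
Definition improper_int (f : R -> R) (a b : R) : R :=
  epsilon (inhabits 0) (fun l => improper_integral f a b l).

Definition Omega_integrand (a : R) (nu : R) : R :=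
  / (cos nu * sqrt ((sin nu)^2 * (cos nu)^2 - (sin a)^2 * (cos a)^2)).

Definition Omega (a : R) : R :=
  sin a * cos a * improper_int (Omega_integrand a) a (PI/2 - a).

Definition Xi_integrand (b : R) (phi : R) : R :=
  / (cos phi * sqrt ((cos phi)^4 - (cos b)^4)).

Definition Xi (b : R) : R :=
  (cos b)^2 * improper_int (Xi_integrand b) b (- b).

(* Main.v *)
Require Import Defs.
From Stdlib Require Import Reals Lra ClassicalEpsilon FunctionalExtensionality.
From Coquelicot Require Import Coquelicot.
Open Scope R_scope.

Lemma improper_unique f a b l1 l2 :
  improper_integral f a b l1 -> improper_integral f a b l2 -> l1 = l2.
Proof.
  intros [Hab [Hi H1]] [_ [_ H2]].
  apply Rminus_diag_uniq; apply Rabs_eq_0.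
  apply Rle_antisym; [| apply Rabs_pos].
  apply Rnot_lt_le; intro Hpos.
  set (e := Rabs (l1 - l2) / 2).
  assert (He : e > 0) by (unfold e; lra).
  destruct (H1 e He) as [d1 [Hd1 P1]].
  destruct (H2 e He) as [d2 [Hd2 P2]].
  set (d := Rmin (Rmin d1 d2) ((b - a)/2) / 2).
  assert (Hd : 0 < d).
  { unfold d. assert (0 < Rmin (Rmin d1 d2) ((b - a) / 2)) by (apply Rmin_glb_lt; [apply Rmin_glb_lt|]; lra). lra. }
  assert (Hd1' : d < d1).
  { unfold d. pose proof (Rmin_l (Rmin d1 d2) ((b-a)/2)). pose proof (Rmin_l d1 d2). lra. }
  assert (Hd2' : d < d2).
  { unfold d. pose proof (Rmin_l (Rmin d1 d2) ((b-a)/2)). pose proof (Rmin_r d1 d2). lra. }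
  assert (Hd3 : d <= (b-a)/4).
  { unfold d. pose proof (Rmin_r (Rmin d1 d2) ((b-a)/2)). lra. }
  destruct (Hi (a + d) (b - d)) as [pr]; try lra.
  specialize (P1 _ _ pr). specialize (P2 _ _ pr).
  assert (A1 : Rabs (RiemannInt pr - l1) < e) by (apply P1; lra).
  assert (A2 : Rabs (RiemannInt pr - l2) < e) by (apply P2; lra).
  assert (Rabs (l1 - l2) <= Rabs (RiemannInt pr - l1) + Rabs (RiemannInt pr - l2)).
  { replace (l1 - l2) with (-(RiemannInt pr - l1) + (RiemannInt pr - l2)) by ring.
    eapply Rle_trans; [apply Rabs_triang|]. rewrite Rabs_Ropp. lra. }
  unfold e in *. lra.
Qed.

Lemma improper_int_eq f a b l : improper_integral f a b l -> improper_int f a b = l.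
Proof.
  intro H. unfold improper_int.
  assert (Hex : exists l, improper_integral f a b l) by (exists l; exact H).
  pose proof (epsilon_spec (inhabits 0) _ Hex) as Hs.
  eapply improper_unique; eauto.
Qed.

Lemma cont_eps (F : R -> R) p : continuity_pt F p ->
  forall e, e > 0 -> exists d, d > 0 /\ forall x, Rabs (x - p) < d -> Rabs (F x - F p) < e.
Proof.
  intros H e He. destruct (H e He) as [d [Hd P]].
  exists d; split; auto. intros x Hx.
  destruct (Req_dec x p) as [->|Hne].
  - rewrite Rminus_diag_eq; auto. rewrite Rabs_R0; lra.
  - apply (P x). split; [split; [exact I| auto] | exact Hx].
Qed.

Lemma ftc_improper (f F : R -> R) p q : p < q ->
  continuity_pt F p -> continuity_pt F q ->
  (forall x, p < x < q -> is_derive F x (f x) /\ continuous f x) ->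
  improper_integral f p q (F q - F p).
Proof.
  intros Hpq Cp Cq HD.
  assert (Hint : forall u v, p < u -> u <= v -> v < q -> is_RInt f u v (F v - F u)).
  { intros u v H1 H2 H3.
    apply (is_RInt_derive F f u v).
    - intros x Hx. rewrite Rmin_left in Hx by lra. rewrite Rmax_right in Hx by lra.
      apply HD; lra.
    - intros x Hx. rewrite Rmin_left in Hx by lra. rewrite Rmax_right in Hx by lra.
      apply HD; lra. }
  split; [exact Hpq|split].
  - intros u v H1 H2 H3. constructor. apply ex_RInt_Reals_0. eexists; apply Hint; auto.
  - intros e He.
    destruct (cont_eps F p Cp (e/2)) as [d1 [Hd1 P1]]; [lra|].
    destruct (cont_eps F q Cq (e/2)) as [d2 [Hd2 P2]]; [lra|].
    exists (Rmin (Rmin d1 d2) ((q - p)/2)). split.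
    { apply Rmin_glb_lt; [apply Rmin_glb_lt|]; lra. }
    intros u v pr Hu1 Hu2 Hv1 Hv2.
    pose proof (Rmin_l (Rmin d1 d2) ((q-p)/2)). pose proof (Rmin_r (Rmin d1 d2) ((q-p)/2)).
    pose proof (Rmin_l d1 d2). pose proof (Rmin_r d1 d2).
    rewrite <- RInt_Reals.
    rewrite (is_RInt_unique f u v (F v - F u)) by (apply Hint; lra).
    assert (A1 : Rabs (F u - F p) < e/2) by (apply P1; rewrite Rabs_right; lra).
    assert (A2 : Rabs (F v - F q) < e/2) by (apply P2; rewrite Rabs_left; lra).
    replace (F v - F u - (F q - F p)) with ((F v - F q) + - (F u - F p)) by ring.
    eapply Rle_lt_trans; [apply Rabs_triang|]. rewrite Rabs_Ropp. lra.
Qed.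

Definition Efun c s := c + (1-c)*(sin s)^2.
Definition kfun c s := sqrt (Efun c s / (1 + Efun c s)).
Definition k2fun c s := 2*sqrt(1-c)/c * sin s * sqrt (Efun c s / ((1+Efun c s)*(Efun c s + c))).
Definition Gfun c x := RInt (kfun c) 0 x.
Definition G2fun c x := RInt (k2fun c) 0 x.
Definition Phi c := RInt (kfun c) (-(PI/2)) (PI/2).

Lemma cont_sqrt_comp (g : R -> R) x : continuous g x -> 0 <= g x ->
  continuous (fun y => sqrt (g y)) x.
Proof.
  intros Hg H. apply (continuous_comp g sqrt); auto.
  apply continuity_pt_filterlim. apply continuity_pt_sqrt; auto.
Qed.

Lemma Efun_bounds c s : 0 <= c <= 1 -> c <= Efun c s <= 1.
Proof.
  intros Hc. unfold Efun. pose proof (sin2 s) as H. pose proof (pow2_ge_0 (sin s)).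
  unfold Rsqr in H. assert (cos s ^2 >= 0) by (apply Rle_ge, pow2_ge_0). 
  split; nra.
Qed.

Lemma kfun_cont c x : 0 <= c <= 1 -> continuous (kfun c) x.
Proof.
  intros Hc. unfold kfun. apply cont_sqrt_comp.
  - apply (ex_derive_continuous (K := R_AbsRing) (V := R_NormedModule)). unfold Efun. auto_derive.
    pose proof (Efun_bounds c x Hc). unfold Efun in H. lra.
  - pose proof (Efun_bounds c x Hc). apply Rdiv_le_0_compat; lra.
Qed.

Lemma k2fun_cont c x : 0 < c <= 1 -> continuous (k2fun c) x.
Proof.
  intros Hc. unfold k2fun. apply (continuous_mult (fun s => 2*sqrt(1-c)/c * sin s)).
  - apply (ex_derive_continuous (K := R_AbsRing) (V := R_NormedModule)). auto_derive. auto.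
  - apply cont_sqrt_comp.
    + apply (ex_derive_continuous (K := R_AbsRing) (V := R_NormedModule)). unfold Efun. auto_derive.
      pose proof (Efun_bounds c x (conj (Rlt_le _ _ (proj1 Hc)) (proj2 Hc))). unfold Efun in H.
      apply Rgt_not_eq. apply Rmult_lt_0_compat; lra.
    + pose proof (Efun_bounds c x (conj (Rlt_le _ _ (proj1 Hc)) (proj2 Hc))).
      apply Rdiv_le_0_compat; [lra|]. apply Rmult_lt_0_compat; lra.
Qed.

Lemma RInt_deriv (f : R -> R) x : (forall y, continuous f y) ->
  is_derive (fun y => RInt f 0 y) x (f x).
Proof.
  intros Hc. apply (is_derive_RInt f (fun y => RInt f 0 y) 0).
  - apply filter_forall. intro y. apply (RInt_correct (V:=R_CompleteNormedModule)). apply (ex_RInt_continuous (V:=R_CompleteNormedModule)). auto.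
  - auto.
Qed.

Lemma Gfun_deriv c x : 0 <= c <= 1 -> is_derive (Gfun c) x (kfun c x).
Proof. intro Hc. apply RInt_deriv. intro; apply kfun_cont; auto. Qed.

Lemma G2fun_deriv c x : 0 < c <= 1 -> is_derive (G2fun c) x (k2fun c x).
Proof. intro Hc. apply RInt_deriv. intro; apply k2fun_cont; auto. Qed.

Lemma k2fun_odd c s : k2fun c (-s) = - k2fun c s.
Proof. unfold k2fun, Efun. rewrite sin_neg. replace ((-sin s)^2) with (sin s ^2) by ring. ring. Qed.

Lemma G2fun_even c x : 0 < c <= 1 -> G2fun c (-x) = G2fun c x.
Proof.
  intro Hc. unfold G2fun.
  assert (Hex : forall a b, ex_RInt (k2fun c) a b).
  { intros. apply (ex_RInt_continuous (V:=R_CompleteNormedModule)). intros; apply k2fun_cont; auto. }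
  assert (H := RInt_correct _ _ _ (Hex (-0) (-x))).
  apply is_RInt_comp_opp in H.
  replace (-0) with 0 in H by ring.
  apply is_RInt_unique in H.
  rewrite <- H. apply RInt_ext. intros y _. rewrite k2fun_odd. apply Ropp_involutive.
Qed.

Lemma Gfun_diff c : 0 <= c <= 1 -> Gfun c (PI/2) - Gfun c (-(PI/2)) = Phi c.
Proof.
  intro Hc. unfold Gfun, Phi.
  assert (Hex : forall a b, ex_RInt (kfun c) a b).
  { intros. apply (ex_RInt_continuous (V:=R_CompleteNormedModule)). intros; apply kfun_cont; auto. }
  rewrite <- (RInt_Chasles (kfun c) (-(PI/2)) 0 (PI/2)) by auto.
  rewrite <- (opp_RInt_swap (kfun c) (-(PI/2)) 0) by auto.
  unfold plus, opp; simpl. ring.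
Qed.
Lemma asin_cont_1 : continuity_pt asin 1.
Proof.
  unfold continuity_pt, continue_in, limit1_in, limit_in. rewrite asin_1. intros e He.
  set (e' := Rmin e (PI/2)).
  assert (He' : 0 < e') by (unfold e'; apply Rmin_glb_lt; [lra| pose proof PI_RGT_0; lra]).
  assert (He'1 : e' <= e) by apply Rmin_l.
  assert (He'2 : e' <= PI/2) by apply Rmin_r.
  exists (1 - sin (PI/2 - e')). split.
  { rewrite sin_shift. assert (cos e' < 1).
    { rewrite <- cos_0. apply cos_decreasing_1; pose proof PI_RGT_0; lra. }
    lra. }
  intros x [[_ Hne] Hx]. simpl in *. unfold R_dist in *.
  destruct (Rle_dec 1 x) as [H1|H1].
  - unfold asin. destruct (Rle_dec x (-1)); [lra|]. destruct (Rle_dec 1 x); [|lra].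
    rewrite Rminus_diag_eq; auto. rewrite Rabs_R0. lra.
  - assert (Hx1 : x < 1) by lra.
    rewrite Rabs_left in Hx by lra.
    pose proof (asin_bound x) as Hb.
    assert (x > sin (PI/2 - e')) by lra.
    assert (Hxm : -1 <= x).
    { pose proof (SIN_bound (PI/2 - e')). lra. }
    assert (asin x > PI/2 - e').
    { apply Rnot_le_lt. intro Hle. destruct (Rle_lt_or_eq_dec _ _ Hle) as [Hl|Heq].
      - assert (sin (asin x) < sin (PI/2 - e')) by (apply sin_increasing_1; pose proof PI_RGT_0; lra).
        rewrite sin_asin in H0 by lra. lra.
      - rewrite <- Heq in H. rewrite sin_asin in H by lra. lra. }
    rewrite Rabs_left1 by lra. lra.
Qed.

Lemma asin_cont_m1 : continuity_pt asin (-1).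
Proof.
  assert (Heq : asin = fun x => - asin (- x)).
  { apply functional_extensionality. intro x. rewrite asin_opp. ring. }
  rewrite Heq.
  apply continuity_pt_opp.
  apply (continuity_pt_comp (fun x => -x) asin).
  - apply continuity_pt_opp. apply continuity_pt_id.
  - replace (- -1) with 1 by ring. apply asin_cont_1.
Qed.

Lemma is_derive_asin x : -1 < x < 1 -> is_derive asin x (/ sqrt (1 - x^2)).
Proof.
  intro H. apply is_derive_Reals.
  apply (derive_pt_eq_1 _ _ _ (derivable_pt_asin x H)).
  rewrite derive_pt_asin. unfold Rsqr. replace (x^2) with (x*x) by ring.
  field. apply Rgt_not_eq. apply sqrt_lt_R0. nra.
Qed.

Lemma sqrt_eq X Y : 0 <= Y -> Y*Y = X -> sqrt X = Y.
Proof. intros H1 H2. apply sqrt_lem_1; auto. rewrite <- H2. nra. Qed.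

Lemma sqr_sqrt' X : 0 <= X -> sqrt X * sqrt X = X.
Proof. apply sqrt_sqrt. Qed.

Lemma GA_deriv (G g wf : R -> R) x dw : (forall y, is_derive G y (g y)) ->
  is_derive wf x dw -> -1 < wf x < 1 ->
  is_derive (fun y => G (asin (wf y))) x (dw * (/ sqrt (1 - wf x ^2) * g (asin (wf x)))).
Proof.
  intros HG Hw Hr.
  apply (is_derive_comp (fun z => G (asin z)) wf x); auto.
  apply (is_derive_comp G asin (wf x)); auto.
  apply is_derive_asin; auto.
Qed.

Lemma kfun_asin c w : -1 <= w <= 1 ->
  kfun c (asin w) = sqrt ((c + (1-c)*w^2) / (1 + (c + (1-c)*w^2))).
Proof. intro H. unfold kfun, Efun. rewrite sin_asin; auto. Qed.

Lemma k2fun_asin c w : -1 <= w <= 1 ->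
  k2fun c (asin w) = 2*sqrt(1-c)/c * w *
    sqrt ((c + (1-c)*w^2) / ((1 + (c + (1-c)*w^2)) * ((c + (1-c)*w^2) + c))).
Proof. intro H. unfold k2fun, Efun. rewrite sin_asin; auto. Qed.
Lemma Xi_alg cb sb x y : cb>0 -> sb>0 -> cb^2+sb^2=1 -> y>0 -> x^2+y^2=1 -> y^2 > cb^2 ->
 / cb^2 * ((cb/(sb*y^2)) * (/ sqrt (1 - (cb*x/(sb*y))^2) *
   sqrt ((cb^2 + (1-cb^2)*(cb*x/(sb*y))^2)/(1 + (cb^2 + (1-cb^2)*(cb*x/(sb*y))^2)))))
 = / (y * sqrt (y^4 - cb^4)).
Proof.
  intros Hcb Hsb Hcs Hy Hxy Hyc.
  assert (Hsm : 0 < sqrt (y^2 - cb^2)) by (apply sqrt_lt_R0; lra).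
  assert (Hsp : 0 < sqrt (y^2 + cb^2)) by (apply sqrt_lt_R0; nra).
  assert (Em : sqrt (y^2 - cb^2) * sqrt (y^2 - cb^2) = y^2 - cb^2) by (apply sqr_sqrt'; lra).
  assert (Ep : sqrt (y^2 + cb^2) * sqrt (y^2 + cb^2) = y^2 + cb^2) by (apply sqr_sqrt'; nra).
  assert (Hx2 : x^2 = 1 - y^2) by lra.
  assert (Hs2 : sb^2 = 1 - cb^2) by lra.
  rewrite (sqrt_eq (1 - (cb*x/(sb*y))^2) (sqrt (y^2 - cb^2)/(sb*y))).
  2:{ apply Rlt_le, Rdiv_lt_0_compat; nra. }
  2:{ replace (sqrt (y^2 - cb^2)/(sb*y) * (sqrt (y^2 - cb^2)/(sb*y))) with
        ((sqrt (y^2 - cb^2) * sqrt (y^2 - cb^2))/(sb^2*y^2)) by (field; lra).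
      rewrite Em. replace ((cb*x/(sb*y))^2) with (cb^2*x^2/(sb^2*y^2)) by (field; lra).
      rewrite Hx2, Hs2. field. split; nra. }
  rewrite (sqrt_eq ((cb^2 + (1-cb^2)*(cb*x/(sb*y))^2)/(1 + (cb^2 + (1-cb^2)*(cb*x/(sb*y))^2)))
            (cb / sqrt (y^2 + cb^2))).
  2:{ apply Rlt_le, Rdiv_lt_0_compat; nra. }
  2:{ replace (cb / sqrt (y^2 + cb^2) * (cb / sqrt (y^2 + cb^2))) with
        (cb^2 / (sqrt (y^2 + cb^2) * sqrt (y^2 + cb^2))) by (field; lra).
      rewrite Ep. replace ((cb*x/(sb*y))^2) with (cb^2*x^2/(sb^2*y^2)) by (field; lra).
      rewrite Hx2, Hs2. field. split; [|split]; nra. }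
  rewrite (sqrt_eq (y^4 - cb^4) (sqrt (y^2 - cb^2) * sqrt (y^2 + cb^2))).
  2:{ apply Rlt_le, Rmult_lt_0_compat; lra. }
  2:{ replace (sqrt (y^2 - cb^2) * sqrt (y^2 + cb^2) * (sqrt (y^2 - cb^2) * sqrt (y^2 + cb^2)))
       with ((sqrt (y^2 - cb^2) * sqrt (y^2 - cb^2)) * (sqrt (y^2 + cb^2) * sqrt (y^2 + cb^2))) by ring.
      rewrite Em, Ep. ring. }
  field. repeat split; lra.
Qed.

Lemma is_derive_eqv (f : R -> R) x l1 l2 : is_derive f x l1 -> l1 = l2 -> is_derive f x l2.
Proof. intros H <-; auto. Qed.

Lemma cont_to_pt (f : R -> R) x : continuous f x -> continuity_pt f x.
Proof. intro H. apply continuity_pt_filterlim. exact H. Qed.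

Lemma cont_of_pt (f : R -> R) x : continuity_pt f x -> continuous f x.
Proof. intro H. apply continuity_pt_filterlim. exact H. Qed.

Lemma GA_cont (G : R -> R) (g wf : R -> R) x k :
  (forall y, is_derive G y (g y)) -> continuous wf x -> continuity_pt asin (wf x) ->
  continuity_pt (fun y => k * G (asin (wf y))) x.
Proof.
  intros HG Hw Ha. apply cont_to_pt.
  apply (continuous_comp wf (fun z => k * G (asin z))); auto.
  apply (continuous_comp asin (fun s => k * G s)).
  - apply cont_of_pt; auto.
  - apply (ex_derive_continuous (K := R_AbsRing) (V := R_NormedModule)).
    apply ex_derive_scal. exists (g (asin (wf x))). apply HG.
Qed.

Lemma Xi_main beta : 0 < beta < PI/2 ->
  improper_integral (Xi_integrand (-beta)) (-beta) beta (/ (cos beta ^2) * Phi (cos beta ^2)).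
Proof.
  intros Hb.
  set (cb := cos beta). set (sb := sin beta). set (c := cb^2).
  assert (Hcb : cb > 0) by (apply cos_gt_0; lra).
  assert (Hsb : sb > 0) by (apply sin_gt_0; lra).
  assert (Hcs : cb^2 + sb^2 = 1) by (pose proof (sin2_cos2 beta); unfold Rsqr in *; unfold cb, sb; lra).
  assert (Hc : 0 < c <= 1) by (unfold c; split; nra).
  set (wX := fun phi => cb * sin phi / (sb * cos phi)).
  assert (W1 : wX beta = 1) by (unfold wX; fold cb sb; field; lra).
  assert (Wm1 : wX (-beta) = -1) by (unfold wX; rewrite sin_neg, cos_neg; fold cb sb; field; lra).
  assert (Hcb0 : cb <> 0) by lra.
  assert (Hwc : forall phi, cos phi <> 0 -> continuous wX phi).
  { intros phi Hp. apply (ex_derive_continuous (K := R_AbsRing) (V := R_NormedModule)).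
    unfold wX. auto_derive. intro H. apply Rmult_integral in H. lra. }
  replace (/ c * Phi c) with
     (/ c * Gfun c (asin (wX beta)) - / c * Gfun c (asin (wX (-beta)))).
  2:{ rewrite W1, Wm1. replace (-1) with (-(1)) by ring. rewrite asin_opp, asin_1. fold cb c. rewrite <- (Gfun_diff c) by lra. ring. }
  apply (ftc_improper _ (fun phi => / c * Gfun c (asin (wX phi)))).
  - lra.
  - apply (GA_cont _ (kfun c)). intro; apply Gfun_deriv; lra.
    apply Hwc. rewrite cos_neg. fold cb; lra.
    rewrite Wm1. apply asin_cont_m1.
  - apply (GA_cont _ (kfun c)). intro; apply Gfun_deriv; lra.
    apply Hwc. fold cb; lra.
    rewrite W1. apply asin_cont_1.
  - intros phi Hphi.
    set (x := sin phi). set (y := cos phi).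
    assert (Hy : y > cb).
    { unfold y, cb. destruct (Rle_dec 0 phi).
      - apply cos_decreasing_1; lra.
      - rewrite <- (cos_neg phi). apply cos_decreasing_1; lra. }
    assert (Hxy : x^2 + y^2 = 1) by (pose proof (sin2_cos2 phi); unfold Rsqr in *; unfold x, y; lra).
    assert (Hy2 : y^2 > cb^2) by nra.
    assert (Hw : -1 < wX phi < 1).
    { unfold wX. fold x y.
      assert (Hsq : (cb*x/(sb*y))^2 < 1).
      { replace ((cb*x/(sb*y))^2) with (cb^2*x^2/(sb^2*y^2)) by (field; lra).
        apply (Rmult_lt_reg_r (sb^2*y^2)); [nra|]. field_simplify; [|nra]. nra. }
      split; nra. }
    split.
    + apply is_derive_eqv with
        (/ c * ((cb/(sb*y^2)) * (/ sqrt (1 - wX phi ^2) * kfun c (asin (wX phi))))).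
      * apply is_derive_scal. apply (GA_deriv _ (kfun c)); auto.
        intro; apply Gfun_deriv; lra.
        unfold wX. auto_derive. { intro H. apply Rmult_integral in H. fold y in H. lra. }
        fold x y. pose proof (sin2_cos2 phi) as Hs. unfold Rsqr in Hs. fold x y in Hs.
        field_simplify_eq; [|lra]. replace (cb * y ^ 2 * sb + cb * sb * x ^ 2) with (cb*sb*(x*x+y*y)) by ring. rewrite Hs; ring.
      * rewrite kfun_asin by lra. unfold Xi_integrand. rewrite cos_neg. fold cb y.
        unfold c, wX. fold x y. apply Xi_alg; lra.
    + apply (ex_derive_continuous (K := R_AbsRing) (V := R_NormedModule)).
      unfold Xi_integrand. rewrite cos_neg. fold cb. auto_derive.
      fold y.
      assert (H4 : y^4 - cb^4 > 0).
      { replace (y^4 - cb^4) with ((y^2 - cb^2)*(y^2+cb^2)) by ring. apply Rmult_lt_0_compat; nra. }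
      replace (y*(y*(y*(y*1))) + - (cb*(cb*(cb*(cb*1))))) with (y^4 - cb^4) by ring.
      split; [lra|]. split; auto.
      assert (0 < sqrt (y^4 - cb^4)) by (apply sqrt_lt_R0; nra).
      apply Rgt_not_eq. apply Rmult_lt_0_compat; lra.
Qed.
Lemma Om_alg c x y : 0 < c < 1 -> x > 0 -> y > 0 -> x^2 + y^2 = 1 -> 2*x*y > c ->
  let w := sqrt c / sqrt (1-c) * (x - y) / sqrt (2*x*y) in
  let dw := sqrt c / sqrt (1-c) * (x + y) / (sqrt (2*x*y) * (2*x*y)) in
  let E := c + (1-c)*w^2 in
  2/c * (dw * (/ sqrt (1 - w^2) * sqrt (E/(1+E)))) +
  dw * (/ sqrt (1 - w^2) * (2*sqrt(1-c)/c * w * sqrt (E/((1+E)*(E+c)))))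
  = / (y * sqrt (x^2*y^2 - c^2/4)).
Proof.
  intros Hc Hx Hy Hxy HP w dw E.
  set (sc := sqrt c). set (s1 := sqrt (1-c)). set (p := sqrt (2*x*y)).
  set (u := sqrt (2*x*y - c)). set (v := sqrt (2*x*y + c)).
  assert (Hsc : sc*sc = c) by (apply sqr_sqrt'; lra).
  assert (Hs1 : s1*s1 = 1-c) by (apply sqr_sqrt'; lra).
  assert (Hp : p*p = 2*x*y) by (apply sqr_sqrt'; nra).
  assert (Hu : u*u = 2*x*y - c) by (apply sqr_sqrt'; nra).
  assert (Hv : v*v = 2*x*y + c) by (apply sqr_sqrt'; nra).
  assert (Psc : 0 < sc) by (apply sqrt_lt_R0; lra).
  assert (Ps1 : 0 < s1) by (apply sqrt_lt_R0; lra).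
  assert (Pp : 0 < p) by (apply sqrt_lt_R0; nra).
  assert (Pu : 0 < u) by (apply sqrt_lt_R0; nra).
  assert (Pv : 0 < v) by (apply sqrt_lt_R0; nra).
  assert (Hxy' : (x-y)^2 = 1 - 2*x*y) by nra.
  assert (Hw2 : w^2 = c*(1 - 2*x*y)/((1-c)*(2*x*y))).
  { unfold w. fold sc s1 p. rewrite <- Hxy', <- Hs1, <- Hp, <- Hsc. field. lra. }
  assert (HE : E = c/(2*x*y)).
  { unfold E. rewrite Hw2. field. split; nra. }
  rewrite (sqrt_eq (1 - w^2) (u/(s1*p))).
  2:{ apply Rlt_le, Rdiv_lt_0_compat; nra. }
  2:{ rewrite Hw2. replace (u/(s1*p)*(u/(s1*p))) with ((u*u)/((s1*s1)*(p*p))) by (field; lra).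
      rewrite Hu, Hs1, Hp. field. split; nra. }
  rewrite (sqrt_eq (E/(1+E)) (sc/v)).
  2:{ apply Rlt_le, Rdiv_lt_0_compat; nra. }
  2:{ rewrite HE. replace (sc/v*(sc/v)) with ((sc*sc)/(v*v)) by (field; lra).
      rewrite Hsc, Hv. field. split; nra. }
  rewrite (sqrt_eq (E/((1+E)*(E+c))) (p/(v*(x+y)))).
  2:{ apply Rlt_le, Rdiv_lt_0_compat; nra. }
  2:{ rewrite HE. replace (p/(v*(x+y))*(p/(v*(x+y)))) with ((p*p)/((v*v)*((x+y)*(x+y)))) by (field; nra).
      rewrite Hp, Hv. replace ((x+y)*(x+y)) with (1 + 2*x*y) by nra. field. split; nra. }
  rewrite (sqrt_eq (x^2*y^2 - c^2/4) (u*v/2)).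
  2:{ nra. }
  2:{ transitivity ((u*u)*(v*v)/4); [field|]. rewrite Hu, Hv. field. }
  unfold dw, w. fold sc s1 p.
  clear HE Hw2. clearbody sc s1 p u v. clear E w dw. field_simplify.
  - replace (sc^2) with c by (rewrite <- Hsc; ring). field. repeat split; nra.
  - repeat split; nra.
  - repeat split; nra.
Qed.

Lemma Om_main a : 0 < a < PI/4 ->
  improper_integral (Omega_integrand a) a (PI/2 - a)
    (2/(2*sin a*cos a) * Phi (2*sin a*cos a)).
Proof.
  intros Ha.
  set (sa := sin a). set (ca := cos a). set (c := 2*sa*ca).
  assert (Hsa : sa > 0) by (apply sin_gt_0; pose proof PI_RGT_0; lra).
  assert (Hca : ca > 0) by (apply cos_gt_0; pose proof PI_RGT_0; lra).
  assert (Hsc : sa^2 + ca^2 = 1) by (pose proof (sin2_cos2 a); unfold Rsqr in *; unfold sa, ca; lra).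
  assert (Hlt : sa < ca).
  { unfold sa, ca. rewrite <- sin_shift. apply sin_increasing_1; pose proof PI_RGT_0; lra. }
  assert (Hc : 0 < c < 1) by (unfold c; split; nra).
  set (wO := fun nu => sqrt c / sqrt (1-c) * (sin nu - cos nu) / sqrt (2*sin nu*cos nu)).
  assert (Hs1 : sqrt (1-c) = ca - sa).
  { apply sqrt_eq; [lra|]. unfold c. nra. }
  assert (Hsc0 : 0 < sqrt c) by (apply sqrt_lt_R0; lra).
  assert (W1 : wO (PI/2 - a) = 1).
  { unfold wO. rewrite sin_shift, cos_shift. fold sa ca.
    replace (2*ca*sa) with c by (unfold c; ring). rewrite Hs1. field. lra. }
  assert (Wm1 : wO a = -1).
  { unfold wO. fold sa ca. fold c. rewrite Hs1. field. lra. }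
  assert (Hwc : forall nu, 0 < 2*sin nu*cos nu -> continuous wO nu).
  { intros nu Hp. apply (ex_derive_continuous (K := R_AbsRing) (V := R_NormedModule)).
    unfold wO. auto_derive. split; [auto | split; [apply Rgt_not_eq, sqrt_lt_R0; auto | auto]]. }
  assert (Hcc : 0 < c <= 1) by lra.
  assert (Hcc' : 0 <= c <= 1) by lra.
  replace (2/c * Phi c) with
    ((2/c * Gfun c (asin (wO (PI/2 - a))) + 1 * G2fun c (asin (wO (PI/2 - a)))) -
     (2/c * Gfun c (asin (wO a)) + 1 * G2fun c (asin (wO a)))).
  2:{ rewrite W1, Wm1. replace (-1) with (-(1)) by ring. rewrite asin_opp, asin_1.
      rewrite (G2fun_even c (PI/2)) by lra. rewrite <- (Gfun_diff c) by lra. ring. }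
  apply (ftc_improper _ (fun nu => 2/c * Gfun c (asin (wO nu)) + 1 * G2fun c (asin (wO nu)))).
  - pose proof PI_RGT_0; lra.
  - apply continuity_pt_plus.
    + apply (GA_cont _ (kfun c)). intro; apply Gfun_deriv; lra.
      apply Hwc. fold sa ca. unfold c in Hc. nra.
      rewrite Wm1. apply asin_cont_m1.
    + apply (GA_cont _ (k2fun c)). intro; apply G2fun_deriv; lra.
      apply Hwc. fold sa ca. unfold c in Hc. nra.
      rewrite Wm1. apply asin_cont_m1.
  - apply continuity_pt_plus.
    + apply (GA_cont _ (kfun c)). intro; apply Gfun_deriv; lra.
      apply Hwc. rewrite sin_shift, cos_shift. fold sa ca. unfold c in Hc. nra.
      rewrite W1. apply asin_cont_1.
    + apply (GA_cont _ (k2fun c)). intro; apply G2fun_deriv; lra.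
      apply Hwc. rewrite sin_shift, cos_shift. fold sa ca. unfold c in Hc. nra.
      rewrite W1. apply asin_cont_1.
  - intros nu Hnu.
    set (x := sin nu). set (y := cos nu).
    assert (Hx : x > 0) by (apply sin_gt_0; pose proof PI_RGT_0; lra).
    assert (Hy : y > 0) by (apply cos_gt_0; pose proof PI_RGT_0; lra).
    assert (Hxy : x^2 + y^2 = 1) by (pose proof (sin2_cos2 nu); unfold Rsqr in *; unfold x, y; lra).
    assert (HP : 2*x*y > c).
    { assert (E1 : 2*x*y - c = 2*(y*ca - x*sa)*(x*ca - y*sa)).
      { unfold c. transitivity (2*x*y*(sa^2+ca^2) - 2*sa*ca*(x^2+y^2)).
        - rewrite Hsc, Hxy. ring.
        - ring. }
      assert (E2 : y*ca - x*sa = cos (nu + a)) by (rewrite cos_plus; fold x y sa ca; ring).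
      assert (E3 : x*ca - y*sa = sin (nu - a)) by (rewrite sin_minus; fold x y sa ca; ring).
      assert (0 < cos (nu + a)) by (apply cos_gt_0; pose proof PI_RGT_0; lra).
      assert (0 < sin (nu - a)) by (apply sin_gt_0; pose proof PI_RGT_0; lra).
      nra. }
    assert (Hpos : 0 < 2*x*y) by lra.
    assert (Hw : -1 < wO nu < 1).
    { unfold wO. fold x y.
      assert (Hsq : (sqrt c / sqrt (1-c) * (x - y) / sqrt (2*x*y))^2 < 1).
      { assert (0 < sqrt (2*x*y)) by (apply sqrt_lt_R0; lra).
        assert (0 < sqrt (1-c)) by (apply sqrt_lt_R0; lra).
        replace ((sqrt c / sqrt (1-c) * (x - y) / sqrt (2*x*y))^2) with
          ((sqrt c * sqrt c) * (x-y)^2 / ((sqrt (1-c) * sqrt (1-c)) * (sqrt (2*x*y) * sqrt (2*x*y))))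
          by (field; lra).
        rewrite !sqr_sqrt' by lra.
        apply (Rmult_lt_reg_r ((1-c)*(2*x*y))); [nra|]. field_simplify; [|lra]. nra. }
      split; nra. }
    split.
    + apply is_derive_eqv with
        (2/c * ((sqrt c / sqrt (1-c) * (x + y) / (sqrt (2*x*y) * (2*x*y))) *
                (/ sqrt (1 - wO nu ^2) * kfun c (asin (wO nu)))) +
         1 * ((sqrt c / sqrt (1-c) * (x + y) / (sqrt (2*x*y) * (2*x*y))) *
                (/ sqrt (1 - wO nu ^2) * k2fun c (asin (wO nu))))).
      * assert (Hdw : is_derive wO nu (sqrt c / sqrt (1-c) * (x + y) / (sqrt (2*x*y) * (2*x*y)))).
        { unfold wO. auto_derive.
          - fold x y. split; [lra| split; [apply Rgt_not_eq, sqrt_lt_R0; lra| auto]].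
          - fold x y. assert (Pp : 0 < sqrt (2*x*y)) by (apply sqrt_lt_R0; lra).
            assert (Hp : sqrt (2*x*y) * sqrt (2*x*y) = 2*x*y) by (apply sqr_sqrt'; lra).
            rewrite Hp. field_simplify_eq; [|lra].
            transitivity (2*sqrt c*(x+y)*(x^2+y^2)); [ring| rewrite Hxy; ring]. }
        apply (is_derive_plus (fun nu => 2/c * Gfun c (asin (wO nu))) (fun nu => 1 * G2fun c (asin (wO nu)))).
        -- apply is_derive_scal. apply (GA_deriv _ (kfun c)); auto.
           intro; apply Gfun_deriv; lra.
        -- apply is_derive_scal. apply (GA_deriv _ (k2fun c)); auto.
           intro; apply G2fun_deriv; lra.
      * rewrite kfun_asin, k2fun_asin by lra. unfold Omega_integrand. fold x y sa ca.
        replace (sa^2*ca^2) with (c^2/4) by (unfold c; field).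
        rewrite Rmult_1_l. unfold wO. fold x y. apply Om_alg; lra.
    + apply (ex_derive_continuous (K := R_AbsRing) (V := R_NormedModule)).
      unfold Omega_integrand. fold sa ca. auto_derive. fold x y.
      assert (H4 : x^2*y^2 - sa^2*ca^2 > 0).
      { replace (x^2*y^2 - sa^2*ca^2) with ((x*y - sa*ca)*(x*y+sa*ca)) by ring.
        unfold c in HP. apply Rmult_lt_0_compat; nra. }
      replace (x * (x * 1) * (y * (y * 1)) + - (sa * (sa * 1) * (ca * (ca * 1)))) with
        (x^2*y^2 - sa^2*ca^2) by ring.
      split; [lra|]. split; auto.
      assert (0 < sqrt (x^2*y^2 - sa^2*ca^2)) by (apply sqrt_lt_R0; lra).
      apply Rgt_not_eq. apply Rmult_lt_0_compat; lra.
Qed.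

Lemma kfun_even c s : kfun c (-s) = kfun c s.
Proof. unfold kfun, Efun. rewrite sin_neg. replace ((-sin s)^2) with (sin s ^2) by ring. reflexivity. Qed.

Lemma RInt_even_half c : 0 <= c <= 1 ->
  RInt (kfun c) (-(PI/2)) 0 = RInt (kfun c) 0 (PI/2).
Proof.
  intro Hc.
  assert (Hex : forall a b, ex_RInt (kfun c) a b).
  { intros. apply (ex_RInt_continuous (V:=R_CompleteNormedModule)). intros; apply kfun_cont; auto. }
  assert (H := RInt_correct _ _ _ (Hex (-0) (-(PI/2)))).
  apply is_RInt_comp_opp in H.
  replace (-0) with 0 in H by ring.
  apply is_RInt_unique in H.
  rewrite (RInt_ext _ (fun y => opp (kfun c y))) in H.
  2:{ intros; rewrite kfun_even; reflexivity. }
  rewrite (RInt_opp (V:=R_CompleteNormedModule)) in H by auto.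
  rewrite <- (opp_RInt_swap (kfun c) (-(PI/2)) 0) in H by auto.
  change (opp ?x) with (- x) in H. lra.
Qed.

Lemma quarter : RInt (kfun 0) 0 (PI/2) = PI/4.
Proof.
  assert (P2 : 0 < sqrt 2) by apply Rlt_sqrt2_0.
  assert (S2 : sqrt 2 * sqrt 2 = 2) by (apply sqr_sqrt'; lra).
  assert (Hi : is_RInt (kfun 0) 0 (PI/2)
     (minus ((fun s => - asin (cos s * / sqrt 2)) (PI/2)) ((fun s => - asin (cos s * / sqrt 2)) 0))).
  { apply (is_RInt_derive (V:=R_CompleteNormedModule) (fun s => - asin (cos s * / sqrt 2))).
    - intros s Hs. rewrite Rmin_left in Hs by (pose proof PI_RGT_0; lra).
      rewrite Rmax_right in Hs by (pose proof PI_RGT_0; lra).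
      assert (Hsin : 0 <= sin s) by (apply sin_ge_0; pose proof PI_RGT_0; lra).
      assert (Hcs : sin s ^2 + cos s ^2 = 1) by (pose proof (sin2_cos2 s); unfold Rsqr in *; lra).
      assert (Hcb : -1 <= cos s <= 1) by apply COS_bound.
      assert (Hr : -1 < cos s * / sqrt 2 < 1).
      { split; apply (Rmult_lt_reg_r (sqrt 2)); auto; rewrite Rmult_assoc, Rinv_l by lra; nra. }
      apply is_derive_eqv with (- ((- sin s * / sqrt 2) * / sqrt (1 - (cos s * / sqrt 2)^2))).
      + apply (is_derive_opp (fun s => asin (cos s * / sqrt 2))).
        apply (is_derive_comp asin (fun s => cos s * / sqrt 2)).
        * apply is_derive_asin; auto.
        * auto_derive; auto. ring.
      + assert (Q : 0 < sqrt (1 + sin s ^2)) by (apply sqrt_lt_R0; nra).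
        assert (Q2 : sqrt (1 + sin s ^2) * sqrt (1 + sin s ^2) = 1 + sin s^2) by (apply sqr_sqrt'; nra).
        rewrite (sqrt_eq (1 - (cos s * / sqrt 2)^2) (sqrt (1 + sin s^2) * / sqrt 2)).
        2:{ apply Rlt_le, Rmult_lt_0_compat; auto. apply Rinv_0_lt_compat; auto. }
        2:{ transitivity ((sqrt (1 + sin s ^2) * sqrt (1 + sin s ^2)) / (sqrt 2 * sqrt 2)); [field; lra|].
            rewrite Q2, S2. transitivity (1 - cos s ^2 / (sqrt 2 * sqrt 2)); [|field; lra].
            rewrite S2. lra. }
        unfold kfun, Efun.
        rewrite (sqrt_eq ((0 + (1-0)*sin s^2)/(1 + (0 + (1-0)*sin s^2))) (sin s / sqrt (1 + sin s^2))).
        2:{ apply Rdiv_le_0_compat; lra. }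
        2:{ transitivity (sin s * sin s / (sqrt (1 + sin s ^2) * sqrt (1 + sin s ^2))); [field; lra|].
            rewrite Q2. field. nra. }
        match goal with |- ?a = ?b => change (@eq R a b) end.
        field; repeat split; lra.
    - intros s _. apply kfun_cont. lra. }
  apply (is_RInt_unique (V:=R_CompleteNormedModule)) in Hi. rewrite Hi. simpl.
  rewrite cos_PI2, cos_0, Rmult_0_l, Rmult_1_l, asin_0, asin_inv_sqrt2.
  change (minus ?a ?b) with (a - b). ring.
Qed.

Lemma Phi0 : Phi 0 = PI/2.
Proof.
  unfold Phi.
  assert (Hex : forall a b, ex_RInt (kfun 0) a b).
  { intros. apply (ex_RInt_continuous (V:=R_CompleteNormedModule)). intros; apply kfun_cont; lra. }
  rewrite <- (RInt_Chasles (kfun 0) (-(PI/2)) 0 (PI/2)) by auto.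
  rewrite RInt_even_half by lra. rewrite quarter. change (plus ?a ?b) with (a + b). lra.
Qed.

Lemma sqrt_diff A B : 0 <= A -> 0 <= B -> Rabs (sqrt A - sqrt B) <= sqrt (Rabs (A - B)).
Proof.
  assert (K : forall A B, 0 <= B -> B <= A -> sqrt A - sqrt B <= sqrt (A - B)).
  { intros A0 B0 HB HBA.
    pose proof (sqrt_le_1_alt _ _ HBA).
    pose proof (sqrt_positivity B0 HB).
    assert (SA : sqrt A0 * sqrt A0 = A0) by (apply sqr_sqrt'; lra).
    assert (SB : sqrt B0 * sqrt B0 = B0) by (apply sqr_sqrt'; lra).
    rewrite <- (sqrt_square (sqrt A0 - sqrt B0)) by lra.
    apply sqrt_le_1_alt. nra. }
  intros HA HB. destruct (Rle_dec B A).
  - pose proof (sqrt_le_1_alt _ _ r).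
    rewrite Rabs_right by lra. rewrite (Rabs_right (A - B)) by lra. apply K; auto.
  - pose proof (sqrt_le_1_alt A B ltac:(lra)).
    rewrite Rabs_left1 by lra. rewrite (Rabs_left1 (A - B)) by lra.
    replace (- (sqrt A - sqrt B)) with (sqrt B - sqrt A) by ring.
    replace (- (A - B)) with (B - A) by ring. apply K; lra.
Qed.

Lemma kfun_close c s : 0 <= c <= 1 -> Rabs (kfun c s - kfun 0 s) <= sqrt c.
Proof.
  intro Hc. unfold kfun.
  pose proof (Efun_bounds c s Hc). pose proof (Efun_bounds 0 s ltac:(lra)).
  eapply Rle_trans; [apply sqrt_diff; apply Rdiv_le_0_compat; lra|].
  apply sqrt_le_1_alt.
  assert (D : Efun c s / (1 + Efun c s) - Efun 0 s / (1 + Efun 0 s) =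
    (Efun c s - Efun 0 s) / ((1 + Efun c s) * (1 + Efun 0 s))) by (field; lra).
  rewrite D. unfold Efun in *.
  pose proof (pow2_ge_0 (sin s)). pose proof (SIN_bound s).
  assert (sin s ^2 <= 1) by nra.
  rewrite Rabs_right.
  2:{ apply Rle_ge, Rdiv_le_0_compat; nra. }
  apply (Rmult_le_reg_r ((1 + (c + (1-c)*sin s^2)) * (1 + (0 + (1-0)*sin s^2)))); [nra|].
  field_simplify; [|nra].
  assert (0 <= sin s ^4 <= 1) by nra.
  assert (0 <= c^2*(1 - sin s^4)) by (apply Rmult_le_pos; nra).
  assert (0 <= c*sin s^4) by (apply Rmult_le_pos; nra).
  assert (0 <= c*sin s^2) by (apply Rmult_le_pos; nra).
  nra.
Qed.

Lemma Phi_close c : 0 <= c <= 1 -> Rabs (Phi c - PI/2) <= PI * sqrt c.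
Proof.
  intro Hc. rewrite <- Phi0. unfold Phi.
  assert (Hex : forall c a b, 0 <= c <= 1 -> ex_RInt (kfun c) a b).
  { intros. apply (ex_RInt_continuous (V:=R_CompleteNormedModule)). intros; apply kfun_cont; auto. }
  assert (E : RInt (kfun c) (-(PI/2)) (PI/2) - RInt (kfun 0) (-(PI/2)) (PI/2) =
              RInt (fun s => kfun c s - kfun 0 s) (-(PI/2)) (PI/2)).
  { rewrite (RInt_minus (kfun c) (kfun 0)) by (apply Hex; lra). reflexivity. }
  rewrite E. assert (HH : (PI/2 - - (PI/2)) * sqrt c = PI * sqrt c) by (unfold Rminus; field). rewrite <- HH.
  apply abs_RInt_le_const.
  - pose proof PI_RGT_0; lra.
  - apply (ex_RInt_minus (V:=R_NormedModule)); apply Hex; lra.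
  - intros; apply kfun_close; auto.
Qed.

Lemma Omega_Phi a : 0 < a < PI/4 -> Omega a = Phi (2*sin a*cos a).
Proof.
  intro Ha. unfold Omega. rewrite (improper_int_eq _ _ _ _ (Om_main a Ha)).
  assert (0 < sin a) by (apply sin_gt_0; pose proof PI_RGT_0; lra).
  assert (0 < cos a) by (apply cos_gt_0; pose proof PI_RGT_0; lra).
  field. lra.
Qed.

Lemma Xi_Phi beta : 0 < beta < PI/2 -> Xi (-beta) = Phi (cos beta ^2).
Proof.
  intro Hb. unfold Xi. rewrite Ropp_involutive.
  rewrite (improper_int_eq _ _ _ _ (Xi_main beta Hb)).
  rewrite cos_neg.
  assert (0 < cos beta) by (apply cos_gt_0; lra).
  field. lra.
Qed.

Theorem mainTheorem4 :
  (forall a : R, 0 < a < PI / 4 ->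
   forall beta : R, 0 < beta < PI / 2 ->
   (cos beta)^4 = 4 * (sin a)^2 * (cos a)^2 ->
     (exists l, improper_integral (Omega_integrand a) a (PI/2 - a) l) /\
     (exists l, improper_integral (Xi_integrand (- beta)) (- beta) beta l) /\
     Omega a = Xi (- beta)) /\
  limit1_in Omega (fun a => 0 < a < PI / 4) (PI / 2) 0 /\
  limit1_in (fun beta => Xi (- beta)) (fun beta => 0 < beta < PI / 2) (PI / 2) (PI / 2).
Proof.
  split; [|split].
  - intros a Ha beta Hb Heq. split; [|split].
    + eexists; apply Om_main; auto.
    + eexists; apply Xi_main; auto.
    + rewrite Omega_Phi, Xi_Phi by auto.
      assert (0 < sin a) by (apply sin_gt_0; pose proof PI_RGT_0; lra).
      assert (0 < cos a) by (apply cos_gt_0; pose proof PI_RGT_0; lra).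
      assert (0 < cos beta) by (apply cos_gt_0; lra).
      assert (cos beta ^2 = 2*sin a*cos a).
      { assert ((cos beta ^2 - 2*sin a*cos a)*(cos beta^2 + 2*sin a*cos a) = 0) by
          (transitivity (cos beta ^4 - 4 * sin a ^2 * cos a^2); [ring| lra]).
        apply Rmult_integral in H2. destruct H2; nra. }
      rewrite H2. reflexivity.
  - intros eps He. pose proof PI_RGT_0 as HPI.
    exists ((eps/PI)^2/2). split.
    { apply Rdiv_lt_0_compat; [|lra]. apply pow_lt. apply Rdiv_lt_0_compat; lra. }
    intros x [Hx Hd]. simpl in *. unfold R_dist in *.
    rewrite Rminus_0_r, Rabs_right in Hd by lra.
    rewrite Omega_Phi by auto.
    assert (0 < sin x) by (apply sin_gt_0; lra).
    assert (0 < cos x) by (apply cos_gt_0; lra).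
    assert (sin x < x) by (apply sin_lt_x; lra).
    assert (cos x <= 1) by apply COS_bound.
    set (c := 2*sin x*cos x).
    assert (Hc : 0 <= c <= 1).
    { unfold c. split; [nra|]. pose proof (sin2_cos2 x). pose proof (pow2_ge_0 (sin x - cos x)). unfold Rsqr in *. nra. }
    eapply Rle_lt_trans; [apply Phi_close; auto|].
    assert (c < (eps/PI)^2) by (unfold c; nra).
    assert (sqrt c < eps/PI).
    { rewrite <- (sqrt_pow2 (eps/PI)). apply sqrt_lt_1_alt; lra.
      apply Rlt_le, Rdiv_lt_0_compat; lra. }
    apply (Rmult_lt_compat_l PI) in H4; auto.
    replace (PI * (eps/PI)) with eps in H4 by (field; lra). lra.
  - intros eps He. pose proof PI_RGT_0 as HPI.
    exists (eps/PI). split; [apply Rdiv_lt_0_compat; lra|].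
    intros x [Hx Hd]. simpl in *. unfold R_dist in *.
    rewrite Xi_Phi by auto.
    rewrite Rabs_left in Hd by lra.
    assert (0 < cos x) by (apply cos_gt_0; lra).
    assert (cos x < PI/2 - x) by (rewrite <- sin_shift; apply sin_lt_x; lra).
    assert (Hc : 0 <= cos x ^2 <= 1).
    { split; [nra|]. pose proof (sin2_cos2 x). unfold Rsqr in *. nra. }
    eapply Rle_lt_trans; [apply Phi_close; auto|].
    rewrite sqrt_pow2 by lra.
    apply (Rmult_lt_reg_r (/PI)); [apply Rinv_0_lt_compat; lra|].
    replace (PI * cos x * / PI) with (cos x) by (field; lra).
    unfold Rdiv in Hd. lra.
Qed.
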